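(* Consider an execution of the convergence algorithm described in the context, in the CORDA model under a fully asynchronous scheduler, with $n>5f$ robots of which at most $f$ are Byzantine and $m$ are correct. Fix a time $t_0$ and a distance $b>0$. Let $S$ be a set of correct robots with $|S|\ge m-2f$. Suppose there exists a time $t_1\ge t_0$ such that $\max UD_S(t)\le \max UD(t_0)-b$ for every $t>t_1$. Then every destination computed by any correct robot in a cycle that starts after $t_1$ is $\le \max UD(t_0)-b/2$.
   Context: Setting: $n$ robots on the real line, at most $f$ Byzantine (arbitrary positions). Robots are anonymous, oblivious, have no common orientation, and have unlimited visibility with strong multiplicity detection. Correct robots run Look–Compute–Move cycles in the CORDA model: phases of different robots interleave arbitrarily, and the adversary may stop robot $i$ during a Move only after it has moved at least $\delta_i>0$ toward its destination or reached it. The fully asynchronous scheduler only guarantees that each robot is activated infinitely often. Algorithm: with snapshot sorted $P_1\le\dots\le P_n$ and own position $x_i$, robot $i$ is elected iff $x_i\le P_{f+1}$ or $x_i\ge P_{n-f}$. If elected, its destination is the midpoint of $\min(x_i,P_{2f+1})$ and $\max(x_i,P_{n-2f})$, which is the center of $trim^i_{2f}(P)$ (remove, among the $2f$ smallest positions, those below $x_i$, and, among the $2f$ largest positions, those above $x_i$). Notation: the destination of a correct robot at time $t$ is the last destination it computed at or before $t$ (its position if none). $UD(t)$ is the multiset union of positions and destinations of all correct robots at time $t$. $UD_S(t)$ is the same for the robots in $S$ only. *)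

(* Defs.v *)
From HB Require Import structures.
From mathcomp Require Import all_boot all_order all_algebra.
From mathcomp Require Import reals.
Set Implicit Arguments. Unset Strict Implicit. Unset Printing Implicit Defensive.
Import Order.TTheory GRing.Theory Num.Theory.
Local Open Scope ring_scope.

Section RobotDefs.
Variable R : realType.

Definition snapshot (n : nat) (p : 'I_n -> R) : seq R :=
  sort <=%R [seq p j | j <- enum 'I_n].

(* 1-indexed access: Pidx P k = P_k. *)
Definition Pidx (P : seq R) (k : nat) : R := nth 0 P k.-1.

Definition elected (n f : nat) (P : seq R) (x : R) : bool :=
  (x <= Pidx P f.+1) || (Pidx P (n - f) <= x).

(* Destination computed by the algorithm: center of trim^i_{2f}(P) if
   elected, otherwise the robot stays where it is. *)
Definition algo_dest (n f : nat) (P : seq R) (x : R) : R :=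
  if elected n f P x then
    (Num.min x (Pidx P (2 * f).+1) + Num.max x (Pidx P (n - 2 * f))) / 2
  else x.

(* One Look-Compute-Move cycle: Look (snapshot, and computation of the
   destination from it) at time [look], Move during [mstart, mend]. *)
Record lcmcycle := LCMCycle { look : R; mstart : R; mend : R }.

Definition between (a b x : R) : Prop := Num.min a b <= x <= Num.max a b.

Definition cdest (n f : nat) (pos : 'I_n -> R -> R) (cyc : 'I_n -> nat -> lcmcycle)
    (i : 'I_n) (k : nat) : R :=
  let L := look (cyc i k) in
  algo_dest n f (snapshot (fun j => pos j L)) (pos i L).

Definition celected (n f : nat) (pos : 'I_n -> R -> R) (cyc : 'I_n -> nat -> lcmcycle)
    (i : 'I_n) (k : nat) : bool :=
  let L := look (cyc i k) in
  elected n f (snapshot (fun j => pos j L)) (pos i L).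

(* B = set of Byzantine robots (positions pos j t unconstrained for j in B);
   cyc i k = k-th cycle of correct robot i; destf i t = destination of
   correct robot i at time t (last destination computed at or before t,
   its position if none). *)
Definition corda_execution (n f : nat) (B : {set 'I_n}) (delta : 'I_n -> R)
    (pos : 'I_n -> R -> R) (cyc : 'I_n -> nat -> lcmcycle)
    (destf : 'I_n -> R -> R) : Prop :=
  forall i, i \notin B ->
  0 < delta i /\
      (forall k, look (cyc i k) <= mstart (cyc i k) /\
                 mstart (cyc i k) <= mend (cyc i k) /\
                 mend (cyc i k) <= look (cyc i k.+1)) /\
      (* activated infinitely often along the (divergent) timeline *)
      (forall T, exists k, T < look (cyc i k)) /\
      (forall s t, s <= look (cyc i 0) -> t <= look (cyc i 0) -> pos i s = pos i t) /\
      (forall k s t, look (cyc i k) <= s <= mstart (cyc i k) ->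
                     look (cyc i k) <= t <= mstart (cyc i k) -> pos i s = pos i t) /\
      (forall k s t, mend (cyc i k) <= s <= look (cyc i k.+1) ->
                     mend (cyc i k) <= t <= look (cyc i k.+1) -> pos i s = pos i t) /\
      (* Move: monotone motion toward the destination, without overshoot *)
      (forall k s t, mstart (cyc i k) <= s -> s <= t -> t <= mend (cyc i k) ->
                     between (pos i s) (cdest f pos cyc i k) (pos i t)) /\
      (* the adversary stops the move only after delta_i or at the destination *)
      (forall k, pos i (mend (cyc i k)) = cdest f pos cyc i k \/
                 delta i <= `|pos i (mend (cyc i k)) - pos i (mstart (cyc i k))|) /\
      (* destination at time t = last destination computed at or before t
         (only elected robots compute a destination); its position if none *)
      (forall t, (forall k, look (cyc i k) <= t -> ~~ celected f pos cyc i k) ->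
                 destf i t = pos i t) /\
      (forall k t, look (cyc i k) <= t -> celected f pos cyc i k ->
                   (forall k', (k < k')%N -> look (cyc i k') <= t ->
                               ~~ celected f pos cyc i k') ->
                   destf i t = cdest f pos cyc i k).

(* UD_S(t): multiset (as a seq) of positions and destinations of robots in S *)
Definition UDS (n : nat) (S : {set 'I_n}) (pos destf : 'I_n -> R -> R) (t : R)
  : seq R := flatten [seq [:: pos i t; destf i t] | i <- enum S].

Definition seqmax (s : seq R) : R := foldr Num.max (head 0 s) s.

End RobotDefs.

(* Main.v *)
Require Import Defs.
From HB Require Import structures.
From mathcomp Require Import all_boot all_order all_algebra.
From mathcomp Require Import reals.
From mathcomp Require Import lra zify.
Import Order.TTheory GRing.Theory Num.Theory.
Local Open Scope ring_scope.

Lemma cnt_enum (T : finType) (p : pred T) : count p (enum T) = #|p|.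
Proof. by rewrite enumT cardE /enum_mem size_filter. Qed.

Lemma count_lt_strict (T : Type) (a1 a2 : pred T) s :
  subpred a1 a2 -> has (fun x => a2 x && ~~ a1 x) s -> (count a1 s < count a2 s)%N.
Proof.
move=> h; elim: s => //= x s IH /orP [/andP [h2 h1]|hs].
  rewrite h2 (negbTE h1) /= add0n add1n ltnS; exact: sub_count.
move/IH: hs; case e1: (a1 x); first by rewrite (h x e1) /=; lia.
by case: (a2 x) => /=; lia.
Qed.

Lemma le_foldr_max (R : realType) (s : seq R) a x :
  x \in s -> x <= foldr Num.max a s.
Proof.
elim: s => //= y s IH; rewrite inE => /orP [/eqP->|h]; rewrite le_max ?lexx //.
by rewrite IH ?orbT.
Qed.

Lemma le_seqmax (R : realType) (s : seq R) x : x \in s -> x <= seqmax s.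
Proof. exact: le_foldr_max. Qed.

Lemma mem_UDS_pos (R : realType) n (S : {set 'I_n}) (pos destf : 'I_n -> R -> R) t j :
  j \in S -> pos j t \in UDS S pos destf t.
Proof. by move=> hj; apply/flatten_mapP; exists j; rewrite ?mem_enum // inE eqxx. Qed.

Lemma mem_UDS_dest (R : realType) n (S : {set 'I_n}) (pos destf : 'I_n -> R -> R) t j :
  j \in S -> destf j t \in UDS S pos destf t.
Proof. by move=> hj; apply/flatten_mapP; exists j; rewrite ?mem_enum // !inE eqxx orbT. Qed.

Lemma nth_sorted_le (R : realType) (s : seq R) (c : R) i r :
  sorted <=%R s -> (i + r < size s)%N ->
  (count (fun y => (c < y)%R) s <= r)%N -> nth 0 s i <= c.
Proof.
move=> hs hi hc; rewrite leNgt; apply/negP => hlt.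
have : (size s - i <= count (fun y => (c < y)%R) s)%N.
  rewrite -{2}(cat_take_drop i s) count_cat.
  have -> : count (fun y => c < y) (drop i s) = size (drop i s).
    apply/eqP; rewrite -all_count; apply/(all_nthP 0) => j; rewrite size_drop => hj.
    rewrite nth_drop; apply: (lt_le_trans hlt).
    apply: (sorted_leq_nth le_trans lexx 0 hs).
    - by rewrite inE /=; lia.
    - by rewrite inE /= -ltn_subRL.
    - by rewrite leq_addr.
  rewrite size_drop; lia.
lia.
Qed.

Lemma snap_le (R : realType) (n : nat) (p : 'I_n -> R) (c : R) i (A : {set 'I_n}) :
  (forall j, j \notin A -> p j <= c) -> (i + #|A| < n)%N ->
  nth 0 (snapshot p) i <= c.
Proof.
move=> h hi; apply: (@nth_sorted_le _ _ _ _ #|A|).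
- exact: (sort_sorted le_total).
- by rewrite /snapshot size_sort size_map size_enum_ord.
rewrite /snapshot count_sort count_map cnt_enum; apply: subset_leq_card.
apply/subsetP => j; rewrite inE /= => hj; apply/negPn/negP => hA.
by have := h j hA; rewrite leNgt hj.
Qed.

Lemma algo_dest_le (R : realType) n f (P : seq R) x :
  algo_dest n f P x <= Num.max x (Pidx P (n - 2 * f)).
Proof.
rewrite /algo_dest; case: ifP => _; last by rewrite le_max lexx.
have h1 : Num.min x (Pidx P (2 * f).+1) <= Num.max x (Pidx P (n - 2 * f)).
  by apply: (@le_trans _ _ x); rewrite ?ge_min ?le_max lexx.
move: h1; set a := Num.min _ _; set b := Num.max _ _; lra.
Qed.

Theorem lemma10 (R : realType) (n f : nat) (B S : {set 'I_n})
    (delta : 'I_n -> R) (pos : 'I_n -> R -> R) (cyc : 'I_n -> nat -> lcmcycle R)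
    (destf : 'I_n -> R -> R) (t0 t1 b : R) :
  (5 * f < n)%N ->
  (#|B| <= f)%N ->
  corda_execution f B delta pos cyc destf ->
  0 < b ->
  S \subset ~: B ->
  (#|~: B| - 2 * f <= #|S|)%N ->
  t0 <= t1 ->
  (forall t, t1 < t ->
     seqmax (UDS S pos destf t) <= seqmax (UDS (~: B) pos destf t0) - b) ->
  forall (i : 'I_n) (k : nat), i \notin B -> t1 < look (cyc i k) ->
    celected f pos cyc i k ->
    cdest f pos cyc i k <= seqmax (UDS (~: B) pos destf t0) - b / 2.
Proof.
move=> hn hB hex hb hSB hS ht01 hmax i k hi hL hel.
set M := seqmax (UDS (~: B) pos destf t0).
set T := look (cyc i k).
have hUD0 : forall j, j \notin B -> pos j t0 <= M /\ destf j t0 <= M.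
  move=> j hj; have hj' : j \in ~: B by rewrite inE.
  by split; apply: le_seqmax; [apply: mem_UDS_pos | apply: mem_UDS_dest].
have mono : forall j, j \notin B -> forall k1 k2, (k1 <= k2)%N ->
    look (cyc j k1) <= look (cyc j k2).
  move=> j hj k1 k2 /subnK <-; elim: (k2 - k1)%N => [|d IH]; first by rewrite add0n.
  have [_ [hord _]] := hex j hj.
  have [h1 [h2 h3]] := hord (d + k1)%N.
  rewrite addSn; apply: (le_trans IH); apply: (le_trans h1); exact: (le_trans h2 h3).
have hull : forall j, j \notin B -> forall kk s t, look (cyc j kk) <= s -> s <= t ->
    t <= look (cyc j kk.+1) -> between (pos j s) (cdest f pos cyc j kk) (pos j t).
  move=> j hj kk s t h1 h2 h3.
  have [_ [hord [_ [_ [hst1 [hst2 [hmove _]]]]]]] := hex j hj.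
  have [o1 [o2 o3]] := hord kk.
  have btw : forall x d : R, between x d x by move=> x d; rewrite /between ge_min le_max !lexx.
  have A2 : forall p q : bool, p -> q -> p && q by move=> [] [].
  have [hsa|hsa] := leP s (mstart (cyc j kk)).
  - have ps : pos j s = pos j (mstart (cyc j kk)).
      exact: (hst1 kk s _ (A2 _ _ h1 hsa) (A2 _ _ o1 (lexx _))).
    have [hta|hta] := leP t (mstart (cyc j kk)).
      have -> : pos j t = pos j s.
        exact: (hst1 kk t s (A2 _ _ (le_trans h1 h2) hta) (A2 _ _ h1 hsa)).
      exact: btw.
    rewrite ps; have [hte|hte] := leP t (mend (cyc j kk)).
      exact: (hmove kk _ _ (lexx _) (ltW hta) hte).
    have -> : pos j t = pos j (mend (cyc j kk)).
      exact: (hst2 kk t _ (A2 _ _ (ltW hte) h3) (A2 _ _ (lexx _) o3)).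
    exact: (hmove kk _ _ (lexx _) o2 (lexx _)).
  - have [hte|hte] := leP t (mend (cyc j kk)).
      exact: (hmove kk _ _ (ltW hsa) h2 hte).
    have [hse|hse] := leP s (mend (cyc j kk)).
      have -> : pos j t = pos j (mend (cyc j kk)).
        exact: (hst2 kk t _ (A2 _ _ (ltW hte) h3) (A2 _ _ (lexx _) o3)).
      exact: (hmove kk _ _ (ltW hsa) hse (lexx _)).
    have -> : pos j t = pos j s.
      exact: (hst2 kk t s (A2 _ _ (ltW hte) h3) (A2 _ _ (ltW hse) (le_trans h2 h3))).
    exact: btw.
have destM : forall j kk, j \notin B ->
    (forall j', j' \notin B -> pos j' (look (cyc j kk)) <= M) ->
    cdest f pos cyc j kk <= M.
  move=> j kk hj hall; rewrite /cdest /=. apply: le_trans; first exact: algo_dest_le.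
  rewrite ge_max hall //=.
  rewrite /Pidx; apply: (@snap_le _ _ _ _ _ B) => //.
  lia.
have [K hK] : exists K, forall j, j \notin B -> T < look (cyc j K).
  suff : forall l : seq 'I_n, exists K, forall j, j \in l -> j \notin B -> T < look (cyc j K).
    by case/(_ (enum 'I_n)) => K hK; exists K => j; apply: hK; rewrite mem_enum.
  elim=> [|j l [K1 h1]]; first by exists 0%N.
  case: (boolP (j \in B)) => hjB.
    by exists K1 => j'; rewrite inE => /orP [/eqP -> | ]; [rewrite hjB | exact: h1].
  have [_ [_ [hinf _]]] := hex j hjB.
  have [K2 h2] := hinf T.
  exists (maxn K1 K2) => j'; rewrite inE => /orP [/eqP -> _ | hl hj'].
    by apply: (lt_le_trans h2); apply: mono => //; exact: leq_maxr.
  by apply: (lt_le_trans (h1 j' hl hj')); apply: mono => //; exact: leq_maxl.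
pose mu t := count (fun p : 'I_n * nat => (p.1 \notin B) && (look (cyc p.1 p.2) < t))
    [seq (x, y) | x <- enum 'I_n, y <- iota 0 K].
have INV : forall t, t0 <= t -> t <= T -> forall j, j \notin B -> pos j t <= M.
  suff H : forall N t, (mu t < N)%N -> t0 <= t -> t <= T ->
      forall j, j \notin B -> pos j t <= M.
    by move=> t; apply: (H (mu t).+1).
  elim=> [//|N IH] t hmu ht0 htT j hj.
  have [_ [hord [hinf [hst0 [hst1 [hst2 [hmove [_ [hd1 hd2]]]]]]]]] := hex j hj.
  case: (eqVneq t t0) => [-> | htne]; first by case: (hUD0 j hj).
  have ht0' : t0 < t by rewrite lt_neqAle eq_sym htne ht0.
  have exP : exists m, t <= look (cyc j m).
    by exists K; apply: ltW; apply: le_lt_trans htT (hK j hj).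
  case: (ex_minnP exP) => m hm hmin.
  case: m hm hmin => [|k'] hm hmin.
    have -> : pos j t = pos j t0 by apply: hst0; rewrite // (le_trans ht0 hm).
    by case: (hUD0 j hj).
  have hk't : look (cyc j k') < t.
    by rewrite ltNge; apply/negP => /hmin; rewrite ltnn.
  set d := cdest f pos cyc j k'.
  have hmx : forall s, look (cyc j k') <= s -> s <= t -> pos j s <= M -> d <= M ->
      pos j t <= M.
    move=> s h1 h2 hs hdM; have /andP [_ hb'] := hull j hj k' s t h1 h2 hm.
    by apply: (le_trans hb'); rewrite ge_max hs hdM.
  have [hlt0|hge0] := ltP (look (cyc j k')) t0.
  - apply: (hmx t0) => //; first exact: ltW.
      by case: (hUD0 j hj).
    case hce: (celected f pos cyc j k').
      have <- : destf j t0 = d.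
        apply: hd2 => //; first exact: ltW.
        move=> k'' hk'' hlk; exfalso.
        have := mono j hj _ _ hk''.
        move=> h; have := le_trans (le_trans hm h) hlk.
        by rewrite leNgt ht0'.
      by case: (hUD0 j hj).
    have hdx : d = pos j (look (cyc j k')).
      by rewrite /d /cdest /algo_dest; move: hce; rewrite /celected => ->.
    have /andP [hb' _] := hull j hj k' (look (cyc j k')) t0 (lexx _) (ltW hlt0)
        (le_trans (ltW ht0') hm).
    move: hb'; rewrite -hdx minxx => hb'.
    by apply: (le_trans hb'); case: (hUD0 j hj).
  - have hk'K : (k' < K)%N.
      rewrite ltnNge; apply/negP => hKk.
      have h := mono j hj _ _ hKk.
      have := lt_trans (lt_le_trans hk't htT) (hK j hj).
      by rewrite ltNge h.
    have hmu' : (mu (look (cyc j k')) < mu t)%N.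
      apply: count_lt_strict.
      - move=> [x y] /= /andP [-> h] /=; exact: lt_trans h hk't.
      - apply/hasP; exists (j, k').
          by apply: allpairs_f; rewrite ?mem_enum ?mem_iota.
        by rewrite /= hj hk't ltxx.
    have hall : forall j', j' \notin B -> pos j' (look (cyc j k')) <= M.
      move=> j' hj'; apply: (IH _ _ hge0 _ j' hj').
        by rewrite ltnS in hmu; exact: (leq_trans hmu' hmu).
      exact: le_trans (ltW hk't) htT.
    exact: (hmx _ (lexx _) (ltW hk't) (hall j hj) (destM j k' hj hall)).
have hTpos : forall j, j \notin B -> pos j T <= M.
  by apply: INV; [exact: (le_trans ht01 (ltW hL)) | exact: lexx].
have hS' : forall j, j \notin ~: S -> pos j T <= M - b.
  move=> j; rewrite inE negbK => hj; apply: le_trans (hmax T hL).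
  by apply: le_seqmax; apply: mem_UDS_pos.
have cS := cardsC S; have cB := cardsC B; rewrite card_ord in cS cB.
move: hel; rewrite /cdest /celected /algo_dest -/T => ->.
set P := snapshot _.
have h1 : Pidx P (2 * f).+1 <= M - b.
  rewrite /Pidx /=; apply: (@snap_le _ _ _ _ _ (~: S)) => //.
  lia.
have h2 : Pidx P (n - 2 * f) <= M.
  rewrite /Pidx; apply: (@snap_le _ _ _ _ _ B) => //.
  lia.
have h3 : pos i T <= M by apply: hTpos.
have h4 : Num.min (pos i T) (Pidx P (2 * f).+1) <= M - b by rewrite ge_min h1 orbT.
have h5 : Num.max (pos i T) (Pidx P (n - 2 * f)) <= M by rewrite ge_max h3 h2.
move: h4 h5 hb; set a := Num.min _ _; set c := Num.max _ _; lra.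
Qed.
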